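(* For every odd $n\ge 1$, the permutation $\zeta_n$, which has length $(n^2+1)/2$, contains a subsequence order-isomorphic to every permutation of length $n$.
   Context: The word $z_n$ is the concatenation of $n$ runs $r_1\cdots r_n$, where for odd $k$, $r_k$ lists the odd integers in $[n]$ increasingly and for even $k$, $r_k$ lists the even integers in $[n]$ decreasingly. The permutation $\zeta_n$ of length $|z_n|$ is the unique permutation such that for $i\ne j$: $\zeta_n(i)>\zeta_n(j)$ iff either $z_n(i)>z_n(j)$, or $z_n(i)=z_n(j)$ and $i<j$. Words $u,v$ of length $k$ are order-isomorphic if $u(i)>u(j)\iff v(i)>v(j)$ for all $i,j\in[k]$. *)

(* Defs.v *)
From mathcomp Require Import all_boot all_fingroup.
Set Implicit Arguments. Unset Strict Implicit. Unset Printing Implicit Defensive.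

Definition zrun (n k : nat) : seq nat :=
  if odd k then [seq i <- iota 1 n | odd i]
  else rev [seq i <- iota 1 n | ~~ odd i].

Definition zword (n : nat) : seq nat := flatten [seq zrun n k | k <- iota 1 n].

Definition is_zeta (n : nat) (zeta : {perm 'I_(size (zword n))}) : Prop :=
  forall i j : 'I_(size (zword n)), i != j ->
    ((zeta j < zeta i)%N <->
     ((nth 0 (zword n) j < nth 0 (zword n) i)%N \/
      (nth 0 (zword n) i = nth 0 (zword n) j /\ (i < j)%N))).

Definition contains_pattern (N k : nat) (sigma : {perm 'I_N}) (pi : {perm 'I_k}) : Prop :=
  exists f : 'I_k -> 'I_N,
    (forall a b : 'I_k, (a < b)%N -> (f a < f b)%N) /\
    (forall a b : 'I_k, (sigma (f a) < sigma (f b))%N <-> (pi a < pi b)%N).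

(* Main.v *)
Require Import Defs.
From mathcomp Require Import all_boot all_fingroup zify.
Set Implicit Arguments. Unset Strict Implicit. Unset Printing Implicit Defensive.

Definition cost (x y : nat) : nat :=
  if odd x == odd y then (if (if odd x then x < y else y < x) then 0 else 2) else 1.

Definition Rk (k : nat) : rel nat := fun a b => if odd k then a < b else b < a.
Definition after n k x := [seq i <- zrun n k | Rk k x i].
Definition zsuf n j := flatten [seq zrun n i | i <- iota j (n.+1 - j)].
Definition T n k x := after n k x ++ zsuf n k.+1.

Fixpoint kend (k x : nat) (w : seq nat) : nat :=
  if w is y :: w' then kend (k + cost x y) y w' else k.

Lemma zword_suf n : zword n = zsuf n 1.
Proof. by rewrite /zword /zsuf subn1. Qed.

Lemma zsufS n j : j <= n -> zsuf n j = zrun n j ++ zsuf n j.+1.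
Proof. by move=> h; rewrite /zsuf subSn // subSS. Qed.

Lemma Rk_trans k : transitive (Rk k).
Proof. by rewrite /Rk => a b c; case: (odd k) => ? ?; lia. Qed.

Lemma Rk_irr k a : Rk k a a = false.
Proof. by rewrite /Rk; case: (odd k); rewrite ltnn. Qed.

Lemma Rk_tot k a b : a != b -> Rk k a b || Rk k b a.
Proof. by rewrite /Rk; case: (odd k) => ?; lia. Qed.

Lemma zrun_sorted n k : sorted (Rk k) (zrun n k).
Proof.
rewrite /zrun /Rk; case: (odd k).
  by apply: sorted_filter; [exact: ltn_trans | exact: iota_ltn_sorted].
rewrite rev_sorted; apply: sorted_filter; [exact: ltn_trans | exact: iota_ltn_sorted].
Qed.

Lemma mem_zrun n k y : (y \in zrun n k) = [&& 0 < y, y <= n & odd y == odd k].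
Proof.
rewrite /zrun; case: (odd k); rewrite ?mem_rev mem_filter mem_iota; 
  case: (odd y); rewrite /= ?andbT ?andbF //; lia.
Qed.

Lemma split_sorted (R : rel nat) (s : seq nat) y :
  (forall a, R a a = false) -> transitive R -> (forall a b, a != b -> R a b || R b a) ->
  sorted R s -> y \in s -> s = [seq i <- s | R i y] ++ y :: [seq i <- s | R y i].
Proof.
move=> irr tr tot; elim: s => // a s IH /= ps.
have pa := order_path_min tr ps.
rewrite in_cons; case: eqP => [-> _ | /eqP nay /= ys].
  have -> : [seq i <- s | R i a] = [::].
    apply/eqP; rewrite -size_eq0 size_filter -leqn0 leqNgt -has_count.
    apply/hasP => -[i iS Riy]; move/allP: pa => /(_ i iS) Ryi.
    by move: (tr _ _ _ Ryi Riy); rewrite irr.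
  rewrite /= irr /=; congr (_ :: _); apply/esym/all_filterP; exact: pa.
have Ray : R a y by move/allP: pa => /(_ y ys).
have Rya : R y a = false.
  by apply/negP => Rya; move: (tr _ _ _ Ray Rya); rewrite irr.
rewrite Ray Rya /=; congr (_ :: _); apply: IH => //; exact: path_sorted ps.
Qed.

Definition valid n k x := ((k == 0) && (x == 0)) || ((0 < k) && (x \in zrun n k)).

Lemma valid_par n k x : valid n k x -> odd x = odd k.
Proof. by case/orP => [/andP[/eqP-> /eqP->] | /andP[_]] //; rewrite mem_zrun => /and3P[_ _ /eqP]. Qed.

Lemma zrun_split n k y : y \in zrun n k -> zrun n k = [seq i <- zrun n k | Rk k i y] ++ y :: after n k y.
Proof. apply: split_sorted; [exact: Rk_irr | exact: Rk_trans | exact: Rk_tot | exact: zrun_sorted]. Qed.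

Lemma after_split n k x y : Rk k x y -> y \in zrun n k ->
  after n k x = [seq i <- after n k x | Rk k i y] ++ y :: after n k y.
Proof.
move=> xy yin.
have -> : after n k y = [seq i <- after n k x | Rk k y i].
  rewrite /after -filter_predI; apply: eq_filter => i /=.
  by case e: (Rk k y i) => //=; rewrite (Rk_trans xy e).
apply: split_sorted; [exact: Rk_irr | exact: Rk_trans | exact: Rk_tot | |].
  by apply: sorted_filter; [exact: Rk_trans | exact: zrun_sorted].
by rewrite mem_filter xy.
Qed.

Lemma cost_par x y k : odd x = odd k -> odd (k + cost x y) = odd y.
Proof.
rewrite /cost => h; case: eqP => e; first case: ifP => _; lia.
Qed.

Lemma trans_step n k x y : valid n k x -> 0 < y <= n -> k + cost x y <= n ->
  valid n (k + cost x y) y /\ exists pre, T n k x = pre ++ y :: T n (k + cost x y) y.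
Proof.
move=> v /andP[y0 yn] kn; have px := valid_par v.
have yin : y \in zrun n (k + cost x y) by rewrite mem_zrun y0 yn (cost_par y px) eqxx.
have kpos : 0 < k + cost x y.
  case/orP: v => [/andP[/eqP-> /eqP->] | /andP[k0 _]]; last by rewrite ltn_addr.
  by rewrite /cost /=; case: ifP => _ //; case: ifP.
split; first by rewrite /valid kpos yin orbT.
move: kn yin; rewrite /cost; case: eqP => [e|ne].
  case: ifP => [xy|_].
    rewrite addn0 => kn yin.
    have Rxy : Rk k x y by rewrite /Rk -px.
    have k0 : 0 < k by move: kpos; rewrite /cost xy e eqxx addn0.
    have xin : x \in zrun n k by case/orP: v => /andP[] // /eqP k00; move: k0; rewrite k00.
    exists [seq i <- after n k x | Rk k i y].
    by rewrite /T {1}(after_split Rxy yin) -catA.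
  rewrite addn2 => kn yin.
  rewrite /T (zsufS (j := k.+1)); last lia.
  rewrite (zsufS (j := k.+2)) // (zrun_split yin).
  by exists (after n k x ++ zrun n k.+1 ++ [seq i <- zrun n k.+2 | Rk k.+2 i y]); rewrite -!catA.
rewrite addn1 => kn yin.
rewrite /T (zsufS kn) (zrun_split yin).
by exists (after n k x ++ [seq i <- zrun n k.+1 | Rk k.+1 i y]); rewrite -!catA.
Qed.

Lemma emb n w : forall k x, valid n k x -> all (fun y => (0 < y) && (y <= n)) w ->
  kend k x w <= n -> subseq w (T n k x).
Proof.
elim: w => [|y w IH] k x v; first by move=> *; exact: sub0seq.
move=> /= /andP[yb wb] ke.
have kle : forall w k x, k <= kend k x w.
  by elim=> [|z w' IH'] k' x' //=; apply: leq_trans (IH' _ _); rewrite leq_addr.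
have kn : k + cost x y <= n by apply: leq_trans ke.
have [v' [pre ->]] := trans_step v yb kn.
have h := IH _ _ v' wb ke.
rewrite -[y :: w]cat0s; apply: cat_subseq; first exact: sub0seq.
by rewrite /= eqxx.
Qed.

Lemma emb_zword n w : all (fun y => (0 < y) && (y <= n)) w -> kend 0 0 w <= n ->
  subseq w (zword n).
Proof.
move=> wb ke; have := emb (w := w) (n := n) (k := 0) (x := 0) (isT : valid n 0 0) wb ke.
suff -> : T n 0 0 = zword n by [].
rewrite /T zword_suf /after.
have -> : [seq i <- zrun n 0 | Rk 0 0 i] = [::] by apply/eqP; rewrite -size_eq0 size_filter -leqn0 leqNgt -has_count; apply/hasP => -[i].
by [].
Qed.

Lemma subseq_idx (s w : seq nat) : subseq w s -> exists f : nat -> nat,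
  (forall i j, i < j -> j < size w -> f i < f j) /\
  (forall i, i < size w -> f i < size s /\ nth 0 s (f i) = nth 0 w i).
Proof.
elim: s w => [|x s IH] w.
  by move/eqP=> -> /=; exists id; split=> // i j _ /=.
case: w => [|y w].
  by move=> _; exists id; split.
rewrite /=; case: eqP => [<- | _] h.
  have [f [f1 f2]] := IH _ h.
  exists (fun i => if i is i'.+1 then (f i').+1 else 0); split.
    by case=> [|i] [|j] //= ij jw; rewrite ltnS f1.
  by case=> [|i] //= iw; have [? ?] := f2 i iw; split.
have [f [f1 f2]] := IH _ h.
exists (fun i => (f i).+1); split; first by move=> i j ij jw; rewrite ltnS f1.
by move=> i iw; have [? ?] := f2 i iw; split.
Qed.

Lemma iotaS1 j : iota 1 j.+1 = iota 1 j ++ [:: j.+1].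
Proof. by rewrite -[j.+1]addn1 iotaD add1n addn1. Qed.

Lemma count_odd_iota j : count odd (iota 1 j) = uphalf j.
Proof. elim: j => // j IH; rewrite iotaS1 count_cat IH /=; lia. Qed.

Lemma count_even_iota j : count (fun i => ~~ odd i) (iota 1 j) = j./2.
Proof. elim: j => // j IH; rewrite iotaS1 count_cat IH /=; lia. Qed.

Lemma size_zrun n k : size (zrun n k) = if odd k then uphalf n else n./2.
Proof. by rewrite /zrun; case: (odd k); rewrite ?size_rev size_filter ?count_odd_iota ?count_even_iota. Qed.

Lemma sum_alt A B j : sumn [seq (if odd k then A else B) | k <- iota 1 j] = uphalf j * A + j./2 * B.
Proof.
elim: j => [|j IH] //; rewrite iotaS1 map_cat sumn_cat IH /=.
case: (boolP (odd j)) => oj /=.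
- rewrite (_ : uphalf j = (j./2).+1); last lia.
  by rewrite !mulSn; lia.
- rewrite (_ : uphalf j = j./2); last lia.
  by rewrite !mulSn; lia.
Qed.

Lemma size_zword n : odd n -> size (zword n) = (n ^ 2 + 1) %/ 2.
Proof.
move=> on; rewrite /zword size_flatten /shape -map_comp.
rewrite (eq_map (g := fun k => if odd k then uphalf n else n./2)); last by move=> k /=; rewrite size_zrun.
rewrite sum_alt.
have [m ->] : exists m, n = m.*2.+1 by exists n./2; lia.
have -> : uphalf m.*2.+1 = m.+1 by lia.
have -> : (m.*2.+1)./2 = m by lia.
rewrite (_ : _ ^ 2 + 1 = (m.+1 * m.+1 + m * m) * 2) ?mulnK // -muln2 !expnS expn0; nia.
Qed.

Fixpoint D (Q : nat -> nat) (r : nat) : nat :=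
  if r is r'.+1 then D Q r' + (Q r' <= (Q r'.+1).+1) else 0.

Lemma D_le Q r : D Q r <= r.
Proof. elim: r => //= r IH; case: (Q r <= _) => /=; lia. Qed.

Lemma D_mono Q r r' : r <= r' -> D Q r <= D Q r'.
Proof.
elim: r' => [|r' IH]; first by rewrite leqn0 => /eqP ->.
rewrite leq_eqVlt => /orP[/eqP -> //| h].
by apply: leq_trans (IH h) _ => /=; apply: leq_addr.
Qed.

Lemma D_tie Q r r' : r < r' -> D Q r = D Q r' -> Q r' + 2 <= Q r.
Proof.
elim: r' => // r' IH; rewrite ltnS leq_eqVlt => /orP[/eqP <- | lt] /=.
  by case: leqP => h /=; [lia | lia].
move=> e; have m1 := D_mono Q (ltnW lt); have m2 := D_mono Q (leqnSn r').
move: e m2 => /= e m2.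
have e' : D Q r = D Q r' by move: e; case: (Q r' <= _) => /=; lia.
have := IH lt e'; move: e; case: leqP => /= h; lia.
Qed.

Lemma order_key (P Q : nat -> nat) n c a b :
  (forall a, a < n -> P a < n /\ Q (P a) = a) -> a < n -> b < n -> a != b ->
  (P a < P b <-> (D Q (P a) + c < D Q (P b) + c \/ (D Q (P a) + c = D Q (P b) + c /\ b < a))).
Proof.
move=> hP an bn ab; have [_ qa] := hP a an; have [_ qb] := hP b bn.
rewrite ltn_add2r; split.
  move=> lt; have := D_mono Q (ltnW lt); rewrite leq_eqVlt => /orP[/eqP e|]; last by left.
  right; split; first by rewrite e.
  by have := D_tie lt e; rewrite qa qb; lia.
case: (ltngtP (P a) (P b)) => // [gt|eq].
  have := D_mono Q (ltnW gt); rewrite leq_eqVlt => /orP[/eqP e|lt'].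
    have := D_tie gt e; rewrite qa qb => h [|[_ ba]]; lia.
  lia.
by move: (congr1 Q eq); rewrite qa qb => /eqP; rewrite (negbTE ab).
Qed.

Lemma adj_neq (P Q : nat -> nat) n a :
  (forall a, a < n -> P a < n /\ Q (P a) = a) -> a.+1 < n -> D Q (P a) != D Q (P a.+1).
Proof.
move=> hP an; have [_ qa] := hP a (ltnW an); have [_ qb] := hP a.+1 an.
apply/eqP => e; case: (ltngtP (P a) (P a.+1)) => [lt|gt|eq].
- by have := D_tie lt e; rewrite qa qb; lia.
- by have := D_tie gt (esym e); rewrite qa qb; lia.
- by move: (congr1 Q eq); rewrite qa qb; lia.
Qed.

Fixpoint kk (w : nat -> nat) (a : nat) : nat :=
  if a is a'.+1 then kk w a' + cost (w a') (w a) else cost 0 (w 0).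

Lemma kend_kk w m j : kend (kk w j) (w j) (map w (iota j.+1 m)) = kk w (j + m).
Proof. elim: m j => [|m IH] j /=; first by rewrite addn0. by move: (IH j.+1) => /= ->; rewrite addnS. Qed.

Lemma kend_kk0 w n' : kend 0 0 (map w (iota 0 n'.+1)) = kk w n'.
Proof. by rewrite /= add0n (kend_kk w n' 0). Qed.

Lemma cost_pair x y : x != y -> cost x y + cost x.+1 y.+1 = 2.
Proof. rewrite /cost /= !ltnS => ne; case: (odd x) (odd y) => [] [] /=; case: ltngtP ne => //. Qed.

Lemma kk_sum w a : (forall i, i < a -> w i != w i.+1) ->
  kk w a + kk (fun i => (w i).+1) a = a.*2 + 3.
Proof.
elim: a => [|a IH] h /=.
  by rewrite /cost /=; case: (odd (w 0)) => /=; case: (w 0) => [|[]].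
have := cost_pair (h a (ltnSn a)).
have := IH (fun i ia => h i (ltnW ia)); lia.
Qed.

Lemma kk_par w a : odd (kk w a) = odd (w a).
Proof. elim: a => [|a IH] /=; first exact: (cost_par (w 0) (x := 0) (k := 0)). exact: cost_par. Qed.

Lemma kk_ext w w' a : (forall i, i <= a -> w i = w' i) -> kk w a = kk w' a.
Proof. elim: a => [|a IH] h /=; first by rewrite h. by rewrite IH ?h // => i ia; apply: h; apply: ltnW. Qed.

Lemma cost_lt x y : x < y -> cost x y = if odd x == odd y then (if odd x then 0 else 2) else 1.
Proof. by move=> xy; rewrite /cost xy; case: (odd x) => //; rewrite ltnNge ltnW. Qed.

Lemma cost_diff x y : odd x != odd y -> cost x y = 1.
Proof. by rewrite /cost => /negbTE ->. Qed.

Lemma DC (Q : nat -> nat) n' c i j :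
  (forall i, i < n' -> Q i <= (Q i.+1).+1) ->
  i < j -> j <= n' -> c < Q i -> Q j <= c ->
  exists k, [/\ i <= k, k < j, Q k = c.+1 & Q k.+1 = c].
Proof.
move=> hnb; elim: j => // j IH ij jn ci cj.
case: (ltnP c (Q j)) => h.
  have := hnb j jn; exists j; split => //; lia.
have ij' : i < j by rewrite ltnS leq_eqVlt in ij; case/orP: ij => [/eqP e|//]; move: ci h; rewrite e; lia.
have [k [? ? ? ?]] := IH ij' (ltnW jn) ci h.
by exists k; split => //; apply: ltnW.
Qed.

Lemma cover (F G : nat -> nat) n a :
  (forall x, x < n -> F x < n /\ G (F x) = x) -> a < n -> (forall b, b <= a -> F b <= a) ->
  forall r, r <= a -> exists2 b, b <= a & F b = r.
Proof.
move=> hF an hb r ra.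
have u : uniq (map F (iota 0 a.+1)).
  rewrite map_inj_in_uniq ?iota_uniq // => x y; rewrite !mem_iota /= !add0n => xa ya e.
  have [_ gx] := hF x (leq_trans xa an); have [_ gy] := hF y (leq_trans ya an).
  by rewrite -gx -gy e.
have sub : {subset map F (iota 0 a.+1) <= iota 0 a.+1}.
  by move=> x /mapP[b]; rewrite !mem_iota /= !add0n => ba ->; rewrite ltnS hb.
have [_ e] : (size (map F (iota 0 a.+1)) = size (iota 0 a.+1)) * (map F (iota 0 a.+1) =i iota 0 a.+1).
  by apply: (uniq_min_size u sub); rewrite size_map.
have : r \in map F (iota 0 a.+1) by rewrite e mem_iota.
by case/mapP => b; rewrite mem_iota add0n => ba ->; exists b.
Qed.

Fixpoint M (P : nat -> nat) (a : nat) : nat := if a is a'.+1 then maxn (M P a') (P a) else P 0.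

Lemma M_ge P a b : b <= a -> P b <= M P a.
Proof.
elim: a => [|a IH]; first by rewrite leqn0 => /eqP ->.
rewrite leq_eqVlt => /orP[/eqP -> |]; first by rewrite /= leq_maxr.
by move=> ba; apply: leq_trans (IH ba) (leq_maxl _ _).
Qed.

Lemma M_is P a : exists2 b, b <= a & M P a = P b.
Proof.
elim: a => [|a [b ba IH]]; first by exists 0.
rewrite /=; case: (leqP (M P a) (P a.+1)) => h.
  by exists a.+1 => //; apply/maxn_idPr.
by exists b; [exact: leqW | rewrite -IH].
Qed.

Lemma M_low (P Q : nat -> nat) n a :
  (forall x, x < n -> P x < n /\ Q (P x) = x) -> a < n -> a <= M P a.
Proof.
move=> hP an.
have u : uniq (map P (iota 0 a.+1)).
  rewrite map_inj_in_uniq ?iota_uniq // => x y; rewrite !mem_iota /= !add0n => xa ya e.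
  have [_ gx] := hP x (leq_trans xa an); have [_ gy] := hP y (leq_trans ya an).
  by rewrite -gx -gy e.
have sub : {subset map P (iota 0 a.+1) <= iota 0 (M P a).+1}.
  by move=> x /mapP[b]; rewrite !mem_iota /= !add0n => ba ->; rewrite ltnS M_ge.
by have := uniq_leq_size u sub; rewrite size_map !size_iota.
Qed.

Lemma F1 (P Q : nat -> nat) n' a :
  (forall x, x < n'.+1 -> P x < n'.+1 /\ Q (P x) = x) ->
  (forall x, x < n'.+1 -> Q x < n'.+1 /\ P (Q x) = x) ->
  (forall i, i < n' -> Q i <= (Q i.+1).+1) ->
  a < n' -> P a.+1 < P a -> P a = (P a.+1).+1.
Proof.
move=> hP hQ hnb an lt.
have [pa qa] := hP a (ltnW an); have [pb qb] := hP a.+1 an.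
have c1 : a < Q (P a.+1) by rewrite qb.
have c2 : Q (P a) <= a by rewrite qa.
have [k [ik kj qk qk1]] := DC hnb lt (ltnSE pa) c1 c2.
have kn : k < n'.+1 by apply: leq_trans kj (ltnW pa).
have k1n : k.+1 < n'.+1 by apply: leq_trans kj pa.
have [_ e1] := hQ k kn; have [_ e2] := hQ k.+1 k1n.
have -> : P a = k.+1 by rewrite -e2 qk1.
by have -> : P a.+1 = k by rewrite -e1 qk.
Qed.

Lemma F2 (P Q : nat -> nat) n' a :
  (forall x, x < n'.+1 -> P x < n'.+1 /\ Q (P x) = x) ->
  (forall x, x < n'.+1 -> Q x < n'.+1 /\ P (Q x) = x) ->
  (forall i, i < n' -> Q i <= (Q i.+1).+1) ->
  a < n' -> P a < P a.+1 -> forall b, b <= a -> P b <= a.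
Proof.
move=> hP hQ hnb an lt b ba; rewrite leqNgt; apply/negP => bad.
have an1 : a < n'.+1 by apply: ltnW.
have bn : b < n'.+1 by apply: leq_ltn_trans ba an1.
have [pb qb] := hP b bn.
case: (boolP (all (fun u => Q u <= a) (iota 0 a.+1))) => [/allP al | /allPn [u]].
  have al' : forall u, u <= a -> Q u <= a by move=> u ua; apply: al; rewrite mem_iota ltnS ua.
  have [u ua qu] := cover hQ an1 al' ba.
  have [_ pu] := hQ u (leq_ltn_trans ua an1).
  by move: bad; rewrite -qu pu ltnNge ua.
rewrite mem_iota add0n ltnS /= -ltnNge => ua au.
have ub : u < P b by apply: leq_ltn_trans ua bad.
have [pa qa] := hP a an1; have [pa1 qa1] := hP a.+1 an.
have c2 : Q (P b) <= a by rewrite qb.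
have [k [ik kj qk qk1]] := DC hnb ub (ltnSE pb) au c2.
have kn : k < n'.+1 by apply: leq_trans kj (ltnW pb).
have k1n : k.+1 < n'.+1 by apply: leq_trans kj pb.
have [_ e1] := hQ k kn; have [_ e2] := hQ k.+1 k1n.
move: lt.
have -> : P a.+1 = k by rewrite -e1 qk.
have -> : P a = k.+1 by rewrite -e2 qk1.
by rewrite ltnNge leqnSn.
Qed.

Lemma cost0 y : cost 0 y = 2 - odd y.
Proof. by rewrite /cost /=; case: (odd y) => //=; rewrite ltn0. Qed.

Lemma inv_special (P Q : nat -> nat) n' :
  (forall x, x < n'.+1 -> P x < n'.+1 /\ Q (P x) = x) ->
  (forall x, x < n'.+1 -> Q x < n'.+1 /\ P (Q x) = x) ->
  (forall i, i < n' -> Q i <= (Q i.+1).+1) ->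
  forall a, a <= n' -> kk (fun x => P x + 1) a <= a + 1 + odd (M P a).
Proof.
move=> hP hQ hnb; elim=> [|a IH] an.
  by rewrite /= cost0 addn1 /=; case: (odd (P 0)).
have an' : a < n' := an.
have IH' := IH (ltnW an).
have par := kk_par (fun x => P x + 1) a.
rewrite /= in par *.
have an1 : a < n'.+1 by apply: ltnW.
have [pa qa] := hP a an1; have [pa1 qa1] := hP a.+1 an.
case: (ltngtP (P a) (P a.+1)) => [lt|gt|eq].
- have f2 := F2 hP hQ hnb an' lt.
  have Ma : M P a = a.
    have := M_low hP an1; have [b ba e] := M_is P a; rewrite e; have := f2 b ba; lia.
  have Pa1 : a < P a.+1.
    rewrite ltnNge; apply/negP => h.
    have [b ba pb] := cover hP an1 f2 h.
    have [_ qb] := hP b (leq_ltn_trans ba an1).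
    by move: qb; rewrite pb qa1 => e; move: ba; rewrite -e ltnn.
  have -> : maxn (M P a) (P a.+1) = P a.+1 by apply/maxn_idPr; rewrite Ma ltnW.
  rewrite Ma in IH'.
  rewrite cost_lt ?ltn_add2r // !addn1 /= in par *.
  case: (boolP (odd (P a))) => oa; case: (boolP (odd (P a.+1))) => ob /=; lia.
- have f1 := F1 hP hQ hnb an' gt.
  have -> : maxn (M P a) (P a.+1) = M P a by apply/maxn_idPl; apply: leq_trans (ltnW gt) (M_ge P (leqnn a)).
  rewrite cost_diff; first lia.
  by rewrite f1 !addn1 /= negbK; case: (odd (P a.+1)).
- by move: (congr1 Q eq); rewrite qa qa1 => e; move: (ltnSn a); rewrite -[X in _ < X]e ltnn.
Qed.

Lemma special (P Q : nat -> nat) n' :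
  (forall x, x < n'.+1 -> P x < n'.+1 /\ Q (P x) = x) ->
  (forall x, x < n'.+1 -> Q x < n'.+1 /\ P (Q x) = x) ->
  (forall i, i < n' -> Q i <= (Q i.+1).+1) -> ~~ odd n' ->
  kk (fun x => P x + 1) n' <= n'.+1.
Proof.
move=> hP hQ hnb on.
have := inv_special hP hQ hnb (leqnn n').
have : M P n' = n'.
  have [b bn e] := M_is P n'.
  have [pb _] := hP b (leq_ltn_trans bn (ltnSn _)).
  have := M_low hP (ltnSn n'); rewrite e; lia.
by move=> ->; rewrite (negbTE on) addn0 addn1.
Qed.

Lemma D_step Q r : D Q r.+1 = r.+1 -> D Q r = r /\ Q r <= (Q r.+1).+1.
Proof.
have dl := D_le Q r; rewrite /=; case: (Q r <= _) => /= e; split => //; lia.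
Qed.

Lemma D_full Q r : D Q r = r -> forall i, i < r -> Q i <= (Q i.+1).+1.
Proof.
elim: r => // r IH e i ir.
have [e1 e2] := D_step e.
by move: ir; rewrite ltnS leq_eqVlt => /orP[/eqP -> // | /(IH e1)].
Qed.

Lemma D_full_le Q r : D Q r = r -> forall i, i <= r -> D Q i = i.
Proof.
elim: r => [|r IH] e i ir; first by move: ir; rewrite leqn0 => /eqP ->.
have [e1 _] := D_step e.
move: ir; rewrite leq_eqVlt => /orP[/eqP -> // | ].
by rewrite ltnS; apply: IH.
Qed.

Theorem mainTheorem6 (n : nat) (hodd : odd n) :
  size (zword n) = (n ^ 2 + 1) %/ 2 /\
  forall zeta : {perm 'I_(size (zword n))}, is_zeta zeta ->
    forall pi : {perm 'I_n}, contains_pattern zeta pi.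
Proof.
split; first exact: size_zword.
case: n hodd => [//|n'] hodd zeta hz pi.
pose P x := nat_of_ord (pi (inord x)).
pose Q x := nat_of_ord ((pi^-1)%g (inord x)).
have hP : forall x, x < n'.+1 -> P x < n'.+1 /\ Q (P x) = x.
  by move=> x xn; split; [exact: ltn_ord | rewrite /Q /P inord_val permK (inordK xn)].
have hQ : forall x, x < n'.+1 -> Q x < n'.+1 /\ P (Q x) = x.
  by move=> x xn; split; [exact: ltn_ord | rewrite /Q /P inord_val permKV (inordK xn)].
have on' : ~~ odd n' by move: hodd => /=.
have [c [c0 wb wk]] : exists c, [/\ 0 < c,
    (forall a, a < n'.+1 -> D Q (P a) + c <= n'.+1) &
    kk (fun a => D Q (P a) + c) n' <= n'.+1].
  have hsum := kk_sum (w := fun a => D Q (P a) + 1) (a := n').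
  have adj : forall i, i < n' -> D Q (P i) + 1 != D Q (P i.+1) + 1.
    by move=> i i_n; rewrite eqn_add2r; apply: (adj_neq hP); rewrite ltnS.
  have {}hsum := hsum adj.
  case: (leqP (kk (fun a => D Q (P a) + 1) n') n'.+1) => k0.
    exists 1; split => // a an; rewrite addn1 ltnS.
    by apply: leq_trans (D_le Q _) _; rewrite -ltnS; case: (hP a an).
  have k1 : kk (fun i => (D Q (P i) + 1).+1) n' <= n'.+1 by lia.
  have dn : D Q n' < n'.
    rewrite ltn_neqAle D_le andbT; apply/negP => /eqP e.
    have hnb := D_full e.
    have ext : forall i, i <= n' -> D Q (P i) + 1 = P i + 1.
      move=> i i_n; rewrite (D_full_le e) //; rewrite -ltnS; by case: (hP i i_n).
    move: k0; rewrite (kk_ext ext) ltnNge; move/negP; apply.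
    exact: (special hP hQ hnb on').
  exists 2; split => // [a an|]; last by move: k1; rewrite (@kk_ext _ (fun a => D Q (P a) + 2)) // => i _; rewrite addn2 addn1.
  have : D Q (P a) <= D Q n' by apply: D_mono; rewrite -ltnS; case: (hP a an).
  lia.
pose w a := D Q (P a) + c.
pose l := map w (iota 0 n'.+1).
have lb : all (fun y => (0 < y) && (y <= n'.+1)) l.
  apply/allP => y /mapP[a]; rewrite mem_iota add0n => an ->.
  by rewrite /w wb // addn_gt0 c0 orbT.
have lk : kend 0 0 l <= n'.+1 by rewrite /l kend_kk0.
have [f [f1 f2]] := subseq_idx (emb_zword lb lk).
have sl : size l = n'.+1 by rewrite size_map size_iota.
have fb : forall a : 'I_n'.+1, f a < size (zword n'.+1).
  by move=> a; case: (f2 a); rewrite ?sl.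
have nthl : forall a : 'I_n'.+1, nth 0 (zword n'.+1) (f a) = w a.
  move=> a; case: (f2 a); rewrite ?sl // => _ ->.
  by rewrite (set_nth_default (w 0)) ?sl // (nth_map 0) ?size_iota // nth_iota.
exists (fun a => Ordinal (fb a)); split.
  by move=> a b ab /=; apply: f1; rewrite ?sl.
move=> a b.
case: (eqVneq a b) => [-> | ab]; first by rewrite !ltnn.
have fab : forall a b : 'I_n'.+1, (f b < f a) = (b < a).
  move=> x y; case: (ltngtP y x) => [yx|xy|e].
  - by apply: f1; rewrite ?sl.
  - by apply/negbTE; rewrite -leqNgt ltnW // f1 ?sl.
  - by rewrite e ltnn.
have ne : Ordinal (fb b) != Ordinal (fb a).
  rewrite -val_eqE /=; case: (ltngtP (val a) (val b)) => h.
  - by rewrite neq_ltn (f1 _ _ h) ?sl ?ltn_ord ?orbT.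
  - by rewrite neq_ltn (f1 _ _ h) ?sl ?ltn_ord.
  - by move: ab; rewrite -val_eqE h eqxx.
have nthl' : forall x : 'I_n'.+1, nth 0 (zword n'.+1) (Ordinal (fb x)) = w x := nthl.
have fab' : (nat_of_ord (Ordinal (fb b)) < nat_of_ord (Ordinal (fb a))) = (b < a) := fab a b.
have := hz _ _ ne; rewrite !nthl' fab' => ->.
have pv : forall x : 'I_n'.+1, nat_of_ord (pi x) = P x by move=> x; rewrite /P inord_val.
rewrite !pv (order_key c hP (ltn_ord a) (ltn_ord b) ab).
rewrite /w; split; case=> [h|[h1 h2]]; (try by left); right; split => //.
Qed.
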